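(* Let $\lambda=(\lambda_1,\dots,\lambda_r)$ be a partition of $n$ with conjugate $\lambda'=(\lambda'_1,\dots,\lambda'_{r'})$, and let $i\ge 1$. Then $h_{2,1}(\lambda)\ge i$ and $h_{1,2}(\lambda)\ge i$ if and only if each of the two character polynomials $q_{[\lambda_2,\dots,\lambda_r]}$ and $q_{[\lambda'_2,\dots,\lambda'_{r'}]}$ contains, in some monomial with non-zero coefficient, a variable $x_j$ with $j\ge i$.
   Context: For a partition $\lambda$ and a cell $(x,y)$ of its Young (Ferrers) diagram (row $x$, column $y$, English convention), $h_{x,y}(\lambda)$ is the hook length at $(x,y)$, i.e. the number of cells to the right of $(x,y)$ in row $x$, plus the number of cells below it in column $y$, plus one; if $(x,y)$ is not a cell of $\lambda$ set $h_{x,y}(\lambda)=0$. For a partition $\mu$ of $m$ (possibly empty, $m=0$), its character polynomial is $q_\mu(x_1,\dots,x_m)=\downarrow\Big(\sum_{\alpha\vdash m}\frac{\chi_\mu(\alpha)}{z_\alpha}\prod_{k=1}^m (k x_k-1)^{a_k}\Big)$, where the sum is over partitions (cycle types) $\alpha=(1^{a_1},2^{a_2},\dots,m^{a_m})$ of $m$, $\chi_\mu(\alpha)$ is the irreducible character of $S_m$ indexed by $\mu$ evaluated at cycle type $\alpha$, $z_\alpha=\prod_k a_k!\,k^{a_k}$, and $\downarrow$ is the linear map sending each monomial $x_1^{c_1}\cdots x_m^{c_m}$ to the product of falling factorials $(x_1)_{c_1}\cdots(x_m)_{c_m}$. (For $\mu$ empty, $q_\mu=1$.) It satisfies $\chi_\lambda(\alpha)=q_{[\lambda_2,\dots,\lambda_r]}(a_1,\dots,a_{n-\lambda_1})$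 for every cycle type $\alpha=(1^{a_1},\dots,n^{a_n})$ of $S_n$. *)

(* Defs.v *)
From HB Require Import structures.
From mathcomp Require Import all_boot all_order all_algebra.
Set Implicit Arguments. Unset Strict Implicit. Unset Printing Implicit Defensive.
Import Order.TTheory GRing.Theory Num.Theory.
Local Open Scope ring_scope.

Definition is_partition (n : nat) (lam : seq nat) : bool :=
  [&& sorted geq lam, all (fun p => 0 < p)%N lam & sumn lam == n].

Definition conj_part (lam : seq nat) : seq nat :=
  [seq count (fun p => j <= p)%N lam | j <- iota 1 (head 0%N lam)].

(* 1-indexed parts; 0 beyond the length *)
Definition part (lam : seq nat) (x : nat) : nat := nth 0%N lam x.-1.

(* hook length h_{x,y}(lam) (row x, column y, 1-indexed), 0 if not a cell *)
Definition hook (lam : seq nat) (x y : nat) : nat :=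
  if [&& (1 <= x)%N, (1 <= y)%N & (y <= part lam x)%N]
  then ((part lam x - y) + (part (conj_part lam) y - x) + 1)%N
  else 0%N.

(* Murnaghan--Nakayama rule on beta-sets (abacus form): removing a rim hook
   of length k = replacing a bead x by x - k (not already a bead), with sign
   (-1)^(number of beads strictly between x - k and x). *)
Fixpoint mn (b rho : seq nat) {struct rho} : int :=
  match rho with
  | [::] => if perm_eq b (iota 0 (size b)) then 1 else 0
  | k :: rho' =>
      foldr (fun x acc =>
               (-1) ^+ (count (fun y => (x - k < y)%N && (y < x)%N) b)
               * mn ((x - k)%N :: rem x b) rho' + acc) 0
            [seq x <- b | (k <= x)%N && ((x - k)%N \notin b)]
  end.

(* beta-set of mu: mu_j + l - j, j = 1..l, l = length of mu *)
Definition beta (mu : seq nat) : seq nat :=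
  [seq (nth 0%N mu j + (size mu).-1 - j)%N | j <- iota 0 (size mu)].

(* chi_mu evaluated at a cycle type given as the list of its cycle lengths *)
Definition chi (mu : seq nat) (alpha : seq nat) : int := mn (beta mu) alpha.

(* A polynomial in x_1..x_m is a formal sum of terms (coefficient, exponent
   vector of length m), entry k-1 of the vector being the exponent of x_k. *)
Definition mpoly := seq (rat * seq nat).

Definition mp_coef (p : mpoly) (c : seq nat) : rat :=
  \sum_(t <- p | t.2 == c) t.1.

Definition mp_add (p q : mpoly) : mpoly := p ++ q.
Definition mp_scale (a : rat) (p : mpoly) : mpoly := [seq (a * t.1, t.2) | t <- p].
Definition mp_mul (p q : mpoly) : mpoly :=
  [seq (s.1 * t.1, [seq (u.1 + u.2)%N | u <- zip s.2 t.2]) | s <- p, t <- q].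
Definition mp_const (m : nat) (a : rat) : mpoly := [:: (a, nseq m 0%N)].
(* the variable x_k, 1 <= k <= m *)
Definition mp_var (m k : nat) : mpoly :=
  [:: (1, [seq nat_of_bool (j == k.-1) | j <- iota 0 m])].
Definition mp_pow (m : nat) (p : mpoly) (e : nat) : mpoly :=
  iter e (mp_mul p) (mp_const m 1).

Definition mp_falling (m k c : nat) : mpoly :=
  \big[mp_mul/mp_const m 1]_(0 <= j < c) mp_add (mp_var m k) (mp_const m (- (j%:R))).

(* the linear map "down-arrow": x_1^{c_1}..x_m^{c_m} |-> (x_1)_{c_1}..(x_m)_{c_m} *)
Definition down (m : nat) (p : mpoly) : mpoly :=
  \big[mp_add/[::]]_(t <- p)
     mp_scale t.1 (\big[mp_mul/mp_const m 1]_(0 <= k < m) mp_falling m k.+1 (nth 0%N t.2 k)).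

(* cycle types alpha = (1^{a_1},..,m^{a_m}) of S_m, encoded by their
   multiplicity vectors a = [:: a_1; ...; a_m] (entry k-1 is a_k). *)
Fixpoint vecs (len bound : nat) : seq (seq nat) :=
  match len with
  | 0 => [:: [::]]
  | l.+1 => [seq x :: v | x <- iota 0 bound.+1, v <- vecs l bound]
  end.
Definition cycle_types (m : nat) : seq (seq nat) :=
  [seq a <- vecs m m | (\sum_(0 <= k < m) k.+1 * nth 0 a k)%N == m].
Definition cyc_list (m : nat) (a : seq nat) : seq nat :=
  flatten [seq nseq (nth 0%N a k) k.+1 | k <- iota 0 m].
Definition zee (m : nat) (a : seq nat) : nat :=
  (\prod_(0 <= k < m) ((nth 0 a k)`! * k.+1 ^ (nth 0 a k)))%N.

Definition charpoly_m (m : nat) (mu : seq nat) : mpoly :=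
  down m (\big[mp_add/[::]]_(a <- cycle_types m)
     mp_scale ((chi mu (cyc_list m a))%:~R / (zee m a)%:R)
       (\big[mp_mul/mp_const m 1]_(0 <= k < m)
          mp_pow m (mp_add (mp_scale (k.+1)%:R (mp_var m k.+1)) (mp_const m (-1)))
                 (nth 0%N a k))).

Definition charpoly (mu : seq nat) : mpoly := charpoly_m (sumn mu) mu.

Definition has_var_ge (i : nat) (q : mpoly) : Prop :=
  exists c : seq nat, mp_coef q c != 0 /\
    exists j : nat, (i <= j)%N /\ (0 < nth 0%N c j.-1)%N.

(* Main.v *)
Require Import Defs.
From mathcomp Require Import all_boot all_order all_algebra.
From mathcomp Require Import zify ring lra.
Set Implicit Arguments. Unset Strict Implicit. Unset Printing Implicit Defensive.
Import Order.TTheory GRing.Theory Num.Theory.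
Local Open Scope ring_scope.

Lemma mn_cons b k rho : mn b (k :: rho) =
  \sum_(x <- [seq x <- b | (k <= x)%N && ((x - k)%N \notin b)])
     ((-1) ^+ (count (fun y => (x - k < y)%N && (y < x)%N) b) * mn ((x - k)%N :: rem x b) rho).
Proof.
rewrite /=; elim: [seq _ <- _ | _] => [|x s IH]; first by rewrite big_nil.
by rewrite big_cons /= IH.
Qed.

Lemma sum_nz (T : eqType) (s : seq T) (F : T -> int) :
  \sum_(x <- s) F x != 0 -> exists2 x, x \in s & F x != 0.
Proof.
elim: s => [|x s IH]; first by rewrite big_nil eqxx.
rewrite big_cons; case: (boolP (F x == 0)) => [/eqP ->|nz _]; last by exists x; rewrite ?mem_head.
rewrite add0r => /IH [y ys nzy]; exists y => //; by rewrite in_cons ys orbT.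
Qed.

Lemma mn_bound (M : nat) b rho : all (fun x => x <= M)%N b -> mn b rho != 0 ->
  all (fun k => k <= M)%N rho.
Proof.
elim: rho b => [|k rho IH] b //= Hb.
rewrite -/(mn b (k :: rho)) mn_cons => /sum_nz [x].
rewrite mem_filter => /andP[/andP[kx _] xb]; rewrite mulf_eq0 negb_or => /andP[_ nz].
have xM : (x <= M)%N by move/allP: Hb => /(_ x xb).
rewrite (leq_trans kx xM) /=; apply: (IH _ _ nz).
rewrite /= (leq_trans (leq_subr _ _) xM) /=.
apply/allP => y /mem_rem yb; by move/allP: Hb => /(_ y yb).
Qed.

Lemma mn_sum (M : nat) b r : mn b (nseq r 1%N ++ [:: M]) != 0 ->
  sumn b = (r + M + sumn (iota 0 (size b)))%N.
Proof.
elim: r b => [|r IH] b /=.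
  rewrite -/(mn b [:: M]) mn_cons => /sum_nz [x].
  rewrite mem_filter => /andP[/andP[Mx _] xb]; rewrite mulf_eq0 negb_or => /andP[_].
  have sz : size ((x - M)%N :: rem x b) = size b.
    by rewrite /= size_rem // prednK //; case: (b) xb.
  rewrite /mn sz; case: ifP => [pe _|]; last by rewrite eqxx.
  have := perm_sumn pe; rewrite /= (perm_sumn (perm_to_rem xb)) /=.
  lia.
rewrite -/(mn b (1%N :: (nseq r 1%N ++ [:: M]))) mn_cons => /sum_nz [x].
rewrite mem_filter => /andP[/andP[Mx _] xb]; rewrite mulf_eq0 negb_or => /andP[_ /IH].
have sz : size ((x - 1)%N :: rem x b) = size b.
  by rewrite /= size_rem // prednK //; case: (b) xb.
rewrite sz (perm_sumn (perm_to_rem xb)) /=.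
lia.
Qed.

Lemma sign_sq (n : nat) : ((-1) ^+ n * (-1) ^+ n = 1 :> int).
Proof. by rewrite -exprD addnn -mul2n exprM sqrrN !expr1n. Qed.

Lemma count_hook (M : nat) b : uniq b -> M \in b -> (0 < M)%N ->
  perm_eq (0%N :: rem M b) (iota 0 (size b)) ->
  count (fun y => (0 < y)%N && (y < M)%N) b = (size b).-1.
Proof.
move=> ub Mb M0 pe.
have szb : (0 < size b)%N by case: (b) Mb.
have pe' : perm_eq (rem M b) (iota 1 (size b).-1).
  by move: pe; rewrite -(prednK szb) /= perm_cons.
rewrite (permP (perm_to_rem Mb)) /= ltnn andbF add0n (permP pe').
have MnR : M \notin rem M b by rewrite (mem_rem_uniq _ ub) inE eqxx.
rewrite -{2}(size_iota 1 (size b).-1); apply/eqP; rewrite -all_count; apply/allP => y.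
rewrite mem_iota => /andP[y1 yl] /=.
rewrite y1 /=; apply/negbNE/negP; rewrite -leqNgt => My.
move: MnR; rewrite (perm_mem pe') mem_iota; lia.
Qed.

Lemma size_move b x k : x \in b -> size ((x - k)%N :: rem x b) = size b.
Proof. by move=> xb; rewrite /= size_rem // prednK //; case: (b) xb. Qed.

Lemma uniq_move b x k : uniq b -> x \in b -> (x - k)%N \notin b -> uniq ((x - k)%N :: rem x b).
Proof.
move=> ub xb nb /=; rewrite rem_uniq // andbT.
by apply: contra nb; apply: mem_rem.
Qed.

Lemma mn_base_val (M : nat) b : uniq b -> all (fun x => x <= M)%N b ->
  mn b [:: M] = \sum_(x <- [seq x <- b | (M <= x)%N && ((x - M)%N \notin b)])
     (if perm_eq (0%N :: rem M b) (iota 0 (size b)) then (-1) ^+ (size b).-1 else 0).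
Proof.
move=> ub Hb; rewrite mn_cons; apply: eq_big_seq => x.
rewrite mem_filter => /andP[/andP[Mx nb] xb].
have xM : x = M by apply/eqP; rewrite eqn_leq Mx andbT; move/allP: Hb => /(_ x xb).
subst x; rewrite subnn in nb *.
have sz := size_move M xb; rewrite subnn in sz.
rewrite /mn sz; case: ifP => pe; last by rewrite mulr0.
rewrite mulr1 count_hook //.
by case: (M) xb nb => // ->.
Qed.

Lemma mn_step b rho : mn b (1%N :: rho) =
  \sum_(x <- [seq x <- b | (1 <= x)%N && ((x - 1)%N \notin b)]) mn ((x - 1)%N :: rem x b) rho.
Proof.
rewrite mn_cons; apply: eq_bigr => x _.
rewrite (@eq_count _ _ pred0); first by rewrite count_pred0 expr0 mul1r.
move=> y /=; apply/negbTE; lia.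
Qed.

Lemma mn_nonneg (M : nat) r b : uniq b -> all (fun x => x <= M)%N b ->
  0 <= (-1) ^+ (size b).-1 * mn b (nseq r 1%N ++ [:: M]).
Proof.
elim: r b => [|r IH] b ub Hb /=.
  rewrite -/(mn b [:: M]) mn_base_val // mulr_sumr; apply: sumr_ge0 => x _.
  by case: ifP => _; rewrite ?mulr0 // sign_sq.
rewrite -/(mn b (1%N :: (nseq r 1%N ++ [:: M]))) mn_step mulr_sumr big_seq; apply: sumr_ge0 => x.
rewrite mem_filter => /andP[/andP[x1 nb] xb].
rewrite -(size_move 1 xb); apply: IH; first exact: uniq_move.
rewrite /= (leq_trans (leq_subr _ _)) /=; last by move/allP: Hb => /(_ x xb).
by apply/allP => y /mem_rem yb; move/allP: Hb => /(_ y yb).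
Qed.

Lemma closed_iota (s : seq nat) : uniq s -> all (fun y => 0 < y)%N s ->
  (forall y, y \in s -> (2 <= y)%N -> y.-1 \in s) -> perm_eq s (iota 1 (size s)).
Proof.
move=> us ps cl.
have dn : forall d y, y \in s -> (d < y)%N -> (y - d)%N \in s.
  elim=> [|d IH] y ys dy; first by rewrite subn0.
  have := cl _ (IH y ys (ltnW dy)); rewrite (_ : (2 <= y - d)%N); last by lia.
  by rewrite -subn1 -subnDA addn1 => /(_ isT).
have le : forall y, y \in s -> (y <= size s)%N.
  move=> y ys; rewrite -{1}(size_iota 1 y); apply: uniq_leq_size; first exact: iota_uniq.
  move=> z; rewrite mem_iota => /andP[z1 zy].
  rewrite (_ : z = y - (y - z))%N; last by lia.
  apply: dn => //; lia.
have sub : {subset s <= iota 1 (size s)}.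
  move=> y ys; rewrite mem_iota add1n ltnS (le _ ys) andbT.
  by move/allP: ps => /(_ y ys).
have [_ eqm] := uniq_min_size us sub (eq_leq (size_iota _ _)).
by apply: uniq_perm => //; exact: iota_uniq.
Qed.

Lemma mn_pos (M : nat) b : uniq b -> M \in b -> all (fun x => (0 < x) && (x <= M))%N b ->
  exists r, 0 < (-1) ^+ (size b).-1 * mn b (nseq r 1%N ++ [:: M]).
Proof.
have [N] := ubnP (sumn b); elim: N b => // N IH b sN ub Mb Hb.
have Hb' : all (fun x => x <= M)%N b by apply: sub_all Hb => x /andP[].
have Hp : forall x, x \in b -> (0 < x)%N by move=> x /(allP Hb) /andP[].
have HM : forall x, x \in b -> (x <= M)%N by move=> x /(allP Hb) /andP[].
case: (boolP (all (fun x => (x == M) || (x < 2)%N || (x.-1 \in b)) b)) => [cl|].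
  exists 0%N.
  have pe : perm_eq (0%N :: rem M b) (iota 0 (size b)).
    have szb : (0 < size b)%N by case: (b) Mb.
    have -> : size b = (size (rem M b)).+1 by rewrite size_rem // prednK.
    rewrite /= perm_cons; apply: closed_iota; first exact: rem_uniq.
      by apply/allP => y /mem_rem /Hp.
    move=> y; rewrite (mem_rem_uniq _ ub) inE => /andP[yM yb] y2.
    rewrite (mem_rem_uniq _ ub) inE.
    have := allP cl y yb; move=> /orP[/orP[/eqP yM'|y2']|yb1].
    - by rewrite yM' eqxx in yM.
    - by rewrite ltnNge y2 in y2'.
    rewrite yb1 andbT; have := HM y yb; apply: contraTneq => e; lia.
  rewrite /= -/(mn b [:: M]) mn_base_val // pe.
  rewrite (@eq_in_filter _ _ (pred1 M)); last first.
    move=> x xb /=; case: (eqVneq x M) => [->|xM]; first by rewrite leqnn subnn /=; apply/negP => /Hp.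
    by rewrite leqNgt ltn_neqAle xM (HM x xb).
  by rewrite filter_pred1_uniq // big_seq1 sign_sq.
case/allPn => x xb; rewrite !negb_or -leqNgt => /andP[/andP[xM x2] nb].
have sb : sumn b = (x + sumn (rem x b))%N by rewrite (perm_sumn (perm_to_rem xb)).
have nb' : (x - 1)%N \notin b by rewrite subn1.
have h1 : (sumn ((x - 1)%N :: rem x b) < N)%N by rewrite /=; lia.
have h2 := uniq_move ub xb nb'.
have h3 : M \in (x - 1)%N :: rem x b by rewrite inE (mem_rem_uniq _ ub) inE Mb andbT; apply/orP; right; rewrite eq_sym.
have h4 : all (fun x => (0 < x) && (x <= M))%N ((x - 1)%N :: rem x b).
  rewrite /= (_ : (0 < x - 1)%N) ?(leq_trans (leq_subr _ _) (HM x xb)) /=; last by lia.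
  by apply/allP => y /mem_rem yb; apply: (allP Hb).
have [r' Hr'] := IH _ h1 h2 h3 h4.
exists r'.+1; rewrite /= -/(mn b (1%N :: (nseq r' 1%N ++ [:: M]))) mn_step mulr_sumr.
rewrite (bigD1_seq x) /=; last exact: filter_uniq; last first.
  by rewrite mem_filter xb nb' andbT; lia.
rewrite -(size_move 1 xb) in Hr' *.
apply: (lt_le_trans Hr'); rewrite lerDl big_seq_cond; apply: sumr_ge0 => y.
rewrite mem_filter => /andP[/andP[/andP[y1 nby] yb] _].
rewrite (size_move 1 xb) -(size_move 1 yb); apply: mn_nonneg; first exact: uniq_move.
rewrite /= (leq_trans (leq_subr _ _) (HM y yb)) /=.
by apply/allP => z /mem_rem /HM.
Qed.

Definition Hk (mu : seq nat) : nat := if mu is x :: _ then (x + size mu).-1 else 0.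

Lemma nth_mono (mu : seq nat) i j : sorted geq mu -> (i <= j)%N -> (j < size mu)%N ->
  (nth 0 mu j <= nth 0 mu i)%N.
Proof.
move=> Hs ij js.
have := @sorted_leq_nth _ geq (fun a b c h1 h2 => leq_trans h2 h1) leqnn 0%N mu Hs i j.
rewrite !inE => /(_ (leq_ltn_trans ij js) js ij); done.
Qed.

Section Beta.
Variable mu : seq nat.
Hypothesis Hs : sorted geq mu.
Hypothesis Hp : all (fun p => 0 < p)%N mu.
Hypothesis Hl : (0 < size mu)%N.

Lemma Hk_nth : Hk mu = (nth 0 mu 0 + (size mu).-1)%N.
Proof. by case: (mu) Hl => //= x s _; rewrite addnS. Qed.

Lemma beta_size : size (beta mu) = size mu.
Proof. by rewrite size_map size_iota. Qed.

Lemma beta_uniq : uniq (beta mu).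
Proof.
rewrite map_inj_in_uniq ?iota_uniq // => i j; rewrite !mem_iota !add0n => il jl.
wlog ij : i j il jl / (i <= j)%N.
  move=> W; case: (leqP i j) => [|/ltnW] h e; first exact: W.
  by apply/esym/W.
have := nth_mono Hs ij jl; lia.
Qed.

Lemma beta_Hk : Hk mu \in beta mu.
Proof.
rewrite Hk_nth; apply/mapP; exists 0%N; first by rewrite mem_iota.
by rewrite subn0.
Qed.

Lemma beta_bound : all (fun x => (0 < x) && (x <= Hk mu))%N (beta mu).
Proof.
rewrite Hk_nth; apply/allP => x /mapP [j]; rewrite mem_iota /= => jl ->.
have := nth_mono Hs (leq0n j) jl.
have : (0 < nth 0 mu j)%N by apply: (allP Hp); rewrite mem_nth.
lia.
Qed.

Lemma beta_sum : sumn (beta mu) = (sumn mu + sumn (iota 0 (size mu)))%N.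
Proof.
have ei : iota 0 (size mu) = index_iota 0 (size mu) by rewrite /index_iota subn0.
rewrite !sumnE big_map [X in (_ = X + _)%N](big_nth 0%N) ei.
rewrite [X in (_ = _ + X)%N](big_nat_rev _ _ _ _ xpredT (fun i => i)) -big_split /=.
apply: eq_big_nat => j /andP[_ jl]; lia.
Qed.
End Beta.

Lemma chi_nz (mu : seq nat) : sorted geq mu -> all (fun p => 0 < p)%N mu -> (0 < size mu)%N ->
  chi mu (nseq (sumn mu - Hk mu) 1%N ++ [:: Hk mu]) != 0.
Proof.
move=> Hs Hp Hl.
have [r Hr] := mn_pos (beta_uniq Hs Hp Hl) (beta_Hk Hl) (beta_bound Hs Hp Hl).
have nz : mn (beta mu) (nseq r 1%N ++ [:: Hk mu]) != 0.
  by apply: contraTneq Hr => ->; rewrite mulr0 ltxx.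
have := mn_sum nz; rewrite beta_sum // beta_size => e.
rewrite /chi (_ : (sumn mu - Hk mu = r)%N) //; lia.
Qed.

Lemma chi_bound (mu : seq nat) rho : sorted geq mu -> all (fun p => 0 < p)%N mu ->
  chi mu rho != 0 -> all (fun k => k <= Hk mu)%N rho.
Proof.
move=> Hs Hp; case: (posnP (size mu)) => Hl.
  case: (mu) Hl => // _; rewrite /chi /beta /=.
  case: rho => //= k rho; rewrite -/(mn [::] (k :: rho)) mn_cons /= big_nil eqxx //.
by apply: mn_bound; apply: sub_all (beta_bound Hs Hp Hl) => x /andP[].
Qed.

Definition zipadd (s t : seq nat) : seq nat := [seq (u.1 + u.2)%N | u <- zip s t].
Definition le2 (c e : seq nat) : bool := all2 leq c e.
Definition dom (e : seq nat) (p : mpoly) : bool := all (fun t => le2 t.2 e) p.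

Lemma le2_refl e : le2 e e.
Proof. by elim: e => //= x e ->; rewrite leqnn. Qed.

Lemma le2_size c e : le2 c e -> size c = size e.
Proof. by elim: c e => [|x c IH] [|y e] //= /andP[_ /IH ->]. Qed.

Lemma le2_nth c e : le2 c e -> forall j, (nth 0 c j <= nth 0 e j)%N.
Proof.
elim: c e => [|x c IH] [|y e] //= /andP[xy H] [|j] //=; exact: IH.
Qed.

Lemma le2_trans c d e : le2 c d -> le2 d e -> le2 c e.
Proof.
elim: c d e => [|x c IH] [|y d] [|z e] //= /andP[xy H1] /andP[yz H2].
by rewrite (leq_trans xy yz) (IH _ _ H1 H2).
Qed.

Lemma le2_anti c e : le2 c e -> le2 e c -> c = e.
Proof.
elim: c e => [|x c IH] [|y e] //= /andP[xy H1] /andP[yx H2].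
by rewrite (IH _ H1 H2); congr (_ :: _); apply/eqP; rewrite eqn_leq xy yx.
Qed.

Lemma zipadd_cons x s y t : zipadd (x :: s) (y :: t) = (x + y)%N :: zipadd s t.
Proof. by []. Qed.

Lemma zipadd_le s e t f : le2 s e -> le2 t f -> le2 (zipadd s t) (zipadd e f).
Proof.
elim: s e t f => [|x s IH] [|y e] [|z t] [|w f] //= /andP[xy H1] /andP[zw H2].
by rewrite (leq_add xy zw) (IH _ _ _ H1 H2).
Qed.

Lemma zipadd_eq s e t f : le2 s e -> le2 t f -> size e = size f ->
  (zipadd s t == zipadd e f) = (s == e) && (t == f).
Proof.
elim: s e t f => [|x s IH] [|y e] [|z t] [|w f] //= /andP[xy H1] /andP[zw H2] [sz].
rewrite !eqseq_cons (IH _ _ _ H1 H2 sz).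
case: (eqVneq x y) => [->|xy']; case: (eqVneq z w) => [->|zw'] /=; rewrite ?eqxx ?andbF //.
- by rewrite eqn_add2l (negbTE zw').
- by rewrite eqn_add2r (negbTE xy').
- have : (x + z < y + w)%N.
    have : (x < y)%N by rewrite ltn_neqAle xy' xy.
    lia.
  by rewrite ltn_neqAle => /andP[/negbTE ->].
Qed.

Lemma size_zipadd s t : size (zipadd s t) = minn (size s) (size t).
Proof. by rewrite size_map size_zip. Qed.

Lemma nth_zipadd s t j : size s = size t -> nth 0 (zipadd s t) j = (nth 0 s j + nth 0 t j)%N.
Proof.
move=> sz; case: (ltnP j (size s)) => js.
  by rewrite (nth_map (0, 0)%N) ?size_zip ?sz ?minnn -?sz // nth_zip.
by rewrite !nth_default ?size_zipadd ?sz ?minnn -?sz.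
Qed.

Lemma coef_cat p q c : mp_coef (p ++ q) c = mp_coef p c + mp_coef q c.
Proof. by rewrite /mp_coef big_cat. Qed.

Lemma coef_scale a p c : mp_coef (mp_scale a p) c = a * mp_coef p c.
Proof. by rewrite /mp_coef big_map mulr_sumr. Qed.

Lemma coef_bigadd (I : Type) (r : seq I) (F : I -> mpoly) c :
  mp_coef (\big[mp_add/[::]]_(i <- r) F i) c = \sum_(i <- r) mp_coef (F i) c.
Proof.
elim: r => [|i r IH]; first by rewrite !big_nil /mp_coef big_nil.
by rewrite !big_cons /mp_add coef_cat IH.
Qed.

Lemma mem_bigadd (I : eqType) (r : seq I) (F : I -> mpoly) t :
  t \in \big[mp_add/[::]]_(i <- r) F i -> exists2 i, i \in r & t \in F i.
Proof.
elim: r => [|i r IH]; first by rewrite big_nil.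
rewrite big_cons mem_cat => /orP[h|/IH [j jr tj]]; first by exists i; rewrite ?mem_head.
by exists j; rewrite // in_cons jr orbT.
Qed.

Lemma mem_scale a p t : t \in mp_scale a p -> exists2 u, u \in p & t = (a * u.1, u.2).
Proof. by move/mapP. Qed.

Lemma coef_nz p c : mp_coef p c != 0 -> exists2 t, t \in p & (t.2 = c /\ t.1 != 0).
Proof.
rewrite /mp_coef; case: (boolP (has (fun t => (t.2 == c) && (t.1 != 0)) p)).
  by case/hasP => t tp /andP[/eqP e nz] _; exists t.
move/hasPn => H; rewrite big1_seq ?eqxx // => t /andP[tc tp].
by have := H t tp; rewrite tc /= negbK => /eqP.
Qed.

Lemma dom_mem e p t : dom e p -> t \in p -> le2 t.2 e.
Proof. by move/allP => H /H. Qed.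

Lemma dom_coef e p c : dom e p -> mp_coef p c != 0 -> le2 c e.
Proof. by move=> D /coef_nz [t tp [<- _]]; exact: dom_mem D tp. Qed.

Lemma dom_mul e f p q : dom e p -> dom f q -> dom (zipadd e f) (mp_mul p q).
Proof.
move=> Dp Dq; apply/allP => t /allpairsP [[s u] /= [sp uq ->]] /=.
exact: zipadd_le (dom_mem Dp sp) (dom_mem Dq uq).
Qed.

Lemma coef_mul_top e f p q : dom e p -> dom f q -> size e = size f ->
  mp_coef (mp_mul p q) (zipadd e f) = mp_coef p e * mp_coef q f.
Proof.
move=> Dp Dq sz; rewrite /mp_coef /mp_mul big_mkcond big_allpairs_dep /=.
rewrite (big_mkcond (fun i : rat * seq nat => i.2 == e)) mulr_suml; apply: eq_big_seq => s sp.
rewrite (big_mkcond (fun i : rat * seq nat => i.2 == f)) mulr_sumr; apply: eq_big_seq => u uq /=.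
rewrite -/(zipadd s.2 u.2) zipadd_eq ?(dom_mem Dp sp) ?(dom_mem Dq uq) //.
by case: (s.2 == e); case: (u.2 == f); rewrite ?mulr0 ?mul0r.
Qed.

Definition fz (m : nat) (r : seq (seq nat)) : seq nat := foldr zipadd (nseq m 0%N) r.

Lemma fz_cons m d r : fz m (d :: r) = zipadd d (fz m r).
Proof. by []. Qed.

Lemma size_fz m r : all (fun d => size d == m) r -> size (fz m r) = m.
Proof.
elim: r => [|d r IH] /=; first by rewrite size_nseq.
by move=> /andP[/eqP sd /IH sr]; rewrite size_zipadd sd sr minnn.
Qed.

Lemma nth_fz m r j : all (fun d => size d == m) r ->
  nth 0 (fz m r) j = (\sum_(d <- r) nth 0 d j)%N.
Proof.
elim: r => [|d r IH] /=; first by rewrite big_nil nth_nseq; case: ifP.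
move=> /andP[/eqP sd H]; rewrite big_cons nth_zipadd ?IH // size_fz // sd.
Qed.

Lemma coef_const m : mp_coef (mp_const m 1) (nseq m 0%N) = 1.
Proof. by rewrite /mp_coef /mp_const big_cons big_nil eqxx addr0. Qed.

Lemma dom_const m a : dom (nseq m 0%N) (mp_const m a).
Proof. by rewrite /dom /= le2_refl. Qed.

Lemma bigmul_top (I : Type) (r : seq I) (F : I -> mpoly) (D : I -> seq nat) m :
  (forall i, size (D i) = m) -> (forall i, dom (D i) (F i)) ->
  dom (fz m (map D r)) (\big[mp_mul/mp_const m 1]_(i <- r) F i) /\
  mp_coef (\big[mp_mul/mp_const m 1]_(i <- r) F i) (fz m (map D r)) =
     \prod_(i <- r) mp_coef (F i) (D i).
Proof.
move=> sD dD; elim: r => [|i r [IH1 IH2]].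
  by rewrite !big_nil; split; [exact: dom_const | exact: coef_const].
have sz : all (fun d => size d == m) (map D r) by elim: (r) => //= j r0 ->; rewrite sD eqxx.
rewrite !big_cons map_cons fz_cons; split; first exact: dom_mul.
rewrite coef_mul_top //; first by congr (_ * _); exact: IH2.
by rewrite sD size_fz.
Qed.

Definition sv (n : nat) (d : seq nat) : seq nat := [seq (n * x)%N | x <- d].

Lemma zipadd_sv n d : zipadd d (sv n d) = sv n.+1 d.
Proof.
apply: (@eq_from_nth _ 0%N); rewrite ?size_zipadd ?size_map ?minnn // => j jd.
by rewrite nth_zipadd ?size_map // !(nth_map 0%N) // mulSn.
Qed.

Lemma sv0 d : sv 0 d = nseq (size d) 0%N.
Proof. by elim: d => //= x d ->. Qed.

Lemma pow_top m p d n : size d = m -> dom d p ->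
  dom (sv n d) (mp_pow m p n) /\ mp_coef (mp_pow m p n) (sv n d) = (mp_coef p d) ^+ n.
Proof.
move=> sd D; elim: n => [|n [IH1 IH2]].
  by rewrite sv0 sd; split; [exact: dom_const | exact: coef_const].
rewrite /mp_pow iterS -/(mp_pow m p n) -zipadd_sv; split; first exact: dom_mul.
by rewrite coef_mul_top // ?IH2 ?exprS // size_map.
Qed.

Definition delta (m k : nat) : seq nat := [seq nat_of_bool (j == k) | j <- iota 0 m].

Lemma size_delta m k : size (delta m k) = m.
Proof. by rewrite size_map size_iota. Qed.

Lemma nth_delta m k j : (j < m)%N -> nth 0%N (delta m k) j = (j == k).
Proof. by move=> jm; rewrite (nth_map 0%N) ?size_iota // nth_iota. Qed.

Lemma delta_nz m k : (k < m)%N -> nseq m 0%N != delta m k.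
Proof.
move=> km; apply/negP => /eqP/(congr1 (fun s => nth 0%N s k)).
by rewrite nth_delta // nth_nseq km eqxx.
Qed.

Lemma le2_zero e : le2 (nseq (size e) 0%N) e.
Proof. by elim: e => //= x e ->. Qed.

Lemma size_sv n d : size (sv n d) = size d.
Proof. by rewrite size_map. Qed.

Lemma fz_nseq m c d : size d = m -> fz m (nseq c d) = sv c d.
Proof.
move=> sd; elim: c => [|c IH]; first by rewrite sv0 sd.
by rewrite /= -/(fz m (nseq c d)) IH zipadd_sv.
Qed.

Lemma sum_delta (f : nat -> nat) m j : (j < m)%N ->
  (\sum_(k <- index_iota 0 m) (f k * (j == k)))%N = f j.
Proof.
move=> jm; rewrite (bigD1_seq j) ?mem_index_iota ?iota_uniq //= eqxx muln1.
by rewrite big1 ?addn0 // => k kj; rewrite eq_sym (negbTE kj) muln0.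
Qed.

Lemma vec_decomp m e : size e = m ->
  fz m (map (fun k => sv (nth 0%N e k) (delta m k)) (index_iota 0 m)) = e.
Proof.
move=> se.
have sz : all (fun d => size d == m) (map (fun k => sv (nth 0%N e k) (delta m k)) (index_iota 0 m)).
  by rewrite all_map; apply/allP => k _ /=; rewrite size_sv size_delta.
apply: (@eq_from_nth _ 0%N); first by rewrite size_fz.
rewrite size_fz // => j jm; rewrite nth_fz // big_map.
rewrite -(sum_delta (fun k => nth 0%N e k) jm); apply: eq_bigr => k _.
by rewrite (nth_map 0%N) ?size_delta // nth_delta.
Qed.

Lemma dom_var_add m k a b : dom (delta m k) (mp_add (mp_scale a (mp_var m k.+1)) (mp_const m b)).
Proof.
rewrite /dom /= le2_refl /=.
by rewrite andbT; have := le2_zero (delta m k); rewrite size_delta.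
Qed.

Lemma coef_var_add m k a b : (k < m)%N ->
  mp_coef (mp_add (mp_scale a (mp_var m k.+1)) (mp_const m b)) (delta m k) = a.
Proof.
move=> km; rewrite /mp_coef /= big_cons big_cons big_nil /=.
have -> : [seq nat_of_bool (j == k) | j <- iota 0 m] == delta m k by [].
by rewrite (negbTE (delta_nz km)) mulr1 addr0.
Qed.

Lemma map_cst (T U : Type) (d : U) (s : seq T) : [seq d | _ <- s] = nseq (size s) d.
Proof. by elim: s => //= x s ->. Qed.

Lemma falling_top m k c :
  dom (sv c (delta m k)) (mp_falling m k.+1 c) /\
  ((k < m)%N -> mp_coef (mp_falling m k.+1 c) (sv c (delta m k)) = 1).
Proof.
have [D C] := @bigmul_top _ (index_iota 0 c) (fun j => mp_add (mp_var m k.+1) (mp_const m (- j%:R)))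
  (fun _ => delta m k) m (fun _ => size_delta m k)
  (fun j => dom_var_add m k 1 (- j%:R)).
have E : fz m [seq delta m k | _ <- index_iota 0 c] = sv c (delta m k).
  by rewrite map_cst size_iota subn0 fz_nseq // size_delta.
rewrite E in D C.
split; first exact: D.
move=> km; rewrite /mp_falling C; apply: big1 => j _.
have := coef_var_add (k := k) 1 (- j%:R) km.
by rewrite /mp_scale /= mul1r.
Qed.

Definition PR m a := \big[mp_mul/mp_const m 1]_(0 <= k < m)
  mp_pow m (mp_add (mp_scale (k.+1)%:R (mp_var m k.+1)) (mp_const m (-1))) (nth 0%N a k).
Definition FF m e := \big[mp_mul/mp_const m 1]_(0 <= k < m) mp_falling m k.+1 (nth 0%N e k).

Lemma PR_top m a : size a = m -> dom a (PR m a) /\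
  mp_coef (PR m a) a = \prod_(k <- index_iota 0 m) ((k.+1)%:R ^+ nth 0%N a k).
Proof.
move=> sa.
have [D C] := @bigmul_top _ (index_iota 0 m)
  (fun k => mp_pow m (mp_add (mp_scale (k.+1)%:R (mp_var m k.+1)) (mp_const m (-1))) (nth 0%N a k))
  (fun k => sv (nth 0%N a k) (delta m k)) m
  (fun k => etrans (size_sv _ _) (size_delta m k))
  (fun k => (pow_top (nth 0%N a k) (size_delta m k) (dom_var_add m k _ _)).1).
rewrite vec_decomp // in D C; split; first exact: D.
rewrite /PR C big_seq [RHS]big_seq; apply: eq_bigr => k; rewrite mem_index_iota => /andP[_ km].
by rewrite (pow_top _ (size_delta m k) (dom_var_add m k _ _)).2 coef_var_add.
Qed.

Lemma FF_top m e : size e = m -> dom e (FF m e) /\ mp_coef (FF m e) e = 1.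
Proof.
move=> se.
have [D C] := @bigmul_top _ (index_iota 0 m)
  (fun k => mp_falling m k.+1 (nth 0%N e k))
  (fun k => sv (nth 0%N e k) (delta m k)) m
  (fun k => etrans (size_sv _ _) (size_delta m k))
  (fun k => (falling_top m k (nth 0%N e k)).1).
rewrite vec_decomp // in D C; split; first exact: D.
rewrite /FF C big_seq; apply: big1 => k; rewrite mem_index_iota => /andP[_ km].
exact: (falling_top m k (nth 0%N e k)).2.
Qed.

Lemma mem_vecs len bound v :
  (v \in vecs len bound) = (size v == len) && all (fun x => x <= bound)%N v.
Proof.
elim: len v => [|len IH] v; first by case: v.
have -> : vecs len.+1 bound = [seq x :: v | x <- iota 0 bound.+1, v <- vecs len bound] by [].
apply/allpairsP/idP => [[[y w] /= [yi wi ->]]|].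
  move: wi; rewrite IH /= eqSS => /andP[-> ->]; rewrite andbT /=.
  by move: yi; rewrite -[0%N :: _]/(iota 0 bound.+1) mem_iota.
case: v => // x v /=; rewrite eqSS => /andP[sv /andP[xb av]]; exists (x, v) => /=; split => //.
  by rewrite -[0%N :: _]/(iota 0 bound.+1) mem_iota /= ltnS.
by rewrite IH sv av.
Qed.

Definition wt (m : nat) (c : seq nat) : nat := (\sum_(0 <= k < m) k.+1 * nth 0%N c k)%N.

Lemma mem_ct m a : (a \in cycle_types m) = [&& size a == m, all (fun x => x <= m)%N a & wt m a == m].
Proof. by rewrite mem_filter mem_vecs andbC andbA. Qed.

Lemma weight_eq m c e : size e = m -> le2 c e -> wt m c = wt m e -> c = e.
Proof.
move=> se ce we; have sc := le2_size ce.
have : (\sum_(0 <= k < m) (k.+1 * nth 0%N e k - k.+1 * nth 0%N c k))%N == 0%N.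
  rewrite sumnB; first by rewrite -/(wt m e) -/(wt m c) we subnn.
  by move=> k _; rewrite leq_mul2l le2_nth ?orbT.
rewrite sum_nat_seq_eq0 => /allP H.
apply: (@eq_from_nth _ 0%N); first by rewrite sc.
rewrite sc se => j jm; have := H j; rewrite mem_index_iota jm => /(_ isT) /=.
have := le2_nth ce j; rewrite -mulnBr muln_eq0 /= subn_eq0 => h1 h2.
by apply/eqP; rewrite eqn_leq h1 h2.
Qed.

Definition a0 (m h : nat) : seq nat := [seq ((k == 0%N) * (m - h) + (k == h.-1))%N | k <- iota 0 m].

Lemma size_a0 m h : size (a0 m h) = m.
Proof. by rewrite size_map size_iota. Qed.

Lemma nth_a0 m h k : (k < m)%N -> nth 0%N (a0 m h) k = ((k == 0%N) * (m - h) + (k == h.-1))%N.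
Proof. by move=> km; rewrite (nth_map 0%N) ?size_iota // nth_iota. Qed.

Lemma a0_ct m h : (1 <= h <= m)%N -> a0 m h \in cycle_types m.
Proof.
move=> /andP[h1 hm]; rewrite mem_ct size_a0 eqxx /=; apply/andP; split.
  apply/allP => x /mapP [k _ ->]; case: (k == 0%N); case: (k == h.-1) => /=; lia.
rewrite /wt.
rewrite (eq_big_nat _ _ (F2 := fun k => (((1 * (m - h)) * (0 == k)) + (h.-1.+1 * (h.-1 == k)))%N)).
  rewrite big_split /= !sum_delta //; try lia.
move=> k /andP[_ km]; rewrite nth_a0 //.
case: (eqVneq k 0%N) => [->|k0]; case: (eqVneq k h.-1) => [e|kh]; rewrite ?e /= ?eqxx; try lia.
Qed.

Lemma flatten_nil (T : Type) (f : nat -> seq T) s :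
  (forall k, k \in s -> f k = [::]) -> flatten (map f s) = [::].
Proof. by elim: s => //= k s IH H; rewrite H ?mem_head // IH // => j js; rewrite H // in_cons js orbT. Qed.

Lemma cyc_a0 m h : (1 <= h <= m)%N -> cyc_list m (a0 m h) = nseq (m - h) 1%N ++ [:: h].
Proof.
move=> /andP[h1 hm]; rewrite /cyc_list.
have E : iota 0 m = iota 0 h ++ iota h (m - h) by rewrite -iotaD subnKC.
rewrite E map_cat flatten_cat.
have F2 : flatten [seq nseq (nth 0%N (a0 m h) k) k.+1 | k <- iota h (m - h)] = [::].
  apply: flatten_nil => k; rewrite mem_iota => /andP[hk km].
  rewrite nth_a0; last by lia.
  have -> : (k == 0%N) = false by apply/negbTE/eqP; lia.
  have -> : (k == h.-1) = false by apply/negbTE/eqP; lia.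
  by [].
rewrite F2 cats0.
case: (eqVneq h 1%N) => [h1'|hn1].
  subst h; rewrite (_ : iota 0 1 = [:: 0%N]) // map_cons.
  rewrite (_ : flatten [:: nseq (nth 0%N (a0 m 1) 0) 1%N] = nseq (nth 0%N (a0 m 1) 0) 1%N); last by rewrite /= cats0.
  rewrite nth_a0 // -[[:: 1%N]]/(nseq 1 1%N) -nseqD; congr nseq; lia.
have E2 : iota 0 h = [:: 0%N] ++ iota 1 (h.-2) ++ [:: h.-1].
  case: h h1 hn1 {E F2 hm} => [|[|h]] // _ _.
  rewrite (_ : h.+2 = 1 + (h + 1))%N; last by lia.
  by rewrite (iotaD 0 1 (h + 1)) (iotaD 1 h 1) add1n addn1.
rewrite E2 !map_cat !flatten_cat.
have F3 : flatten [seq nseq (nth 0%N (a0 m h) k) k.+1 | k <- iota 1 h.-2] = [::].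
  apply: flatten_nil => k; rewrite mem_iota => /andP[hk km].
  rewrite nth_a0; last by lia.
  have -> : (k == 0%N) = false by apply/negbTE/eqP; lia.
  have -> : (k == h.-1) = false by apply/negbTE/eqP; lia.
  by [].
rewrite F3 map_cons.
rewrite (_ : flatten [:: nseq (nth 0%N (a0 m h) 0) 1%N] = nseq (nth 0%N (a0 m h) 0) 1%N); last by rewrite /= cats0.
rewrite (_ : flatten [:: nseq (nth 0%N (a0 m h) h.-1) h.-1.+1] = nseq (nth 0%N (a0 m h) h.-1) h.-1.+1); last by rewrite /= cats0.
rewrite !nth_a0; try lia.
have -> : (0%N == h.-1) = false by apply/negbTE/eqP; lia.
have -> : (h.-1 == 0%N) = false by apply/negbTE/eqP; lia.
by rewrite !eqxx /= mul1n addn0 prednK.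
Qed.

Definition cf (mu : seq nat) (m : nat) (a : seq nat) : rat :=
  (chi mu (cyc_list m a))%:~R / (zee m a)%:R.
Definition QQ (mu : seq nat) (m : nat) : mpoly :=
  \big[mp_add/[::]]_(a <- cycle_types m) mp_scale (cf mu m a) (PR m a).

Lemma charpolyE mu : charpoly mu = down (sumn mu) (QQ mu (sumn mu)).
Proof. by []. Qed.

Lemma downE m p : down m p = \big[mp_add/[::]]_(t <- p) mp_scale t.1 (FF m t.2).
Proof. by []. Qed.

Lemma QQ_terms mu m s : s \in QQ mu m ->
  exists2 a, a \in cycle_types m & le2 s.2 a /\ (s.1 != 0 -> chi mu (cyc_list m a) != 0).
Proof.
case/mem_bigadd => a aC /mem_scale [u uP ->] /=.
have sa : size a = m by move: aC; rewrite mem_ct => /andP[/eqP].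
exists a => //; split; first exact: dom_mem (PR_top sa).1 uP.
rewrite mulf_eq0 negb_or => /andP[nz _]; apply: contra nz => /eqP c0.
by rewrite /cf c0 mul0r.
Qed.

Lemma char_terms mu t : t \in charpoly mu -> t.1 != 0 ->
  exists2 a, a \in cycle_types (sumn mu) & le2 t.2 a /\ chi mu (cyc_list (sumn mu) a) != 0.
Proof.
rewrite charpolyE downE; case/mem_bigadd => s sQ /mem_scale [u uF ->] /=.
rewrite mulf_eq0 negb_or => /andP[s1 _].
have [a aC [sa ca]] := QQ_terms sQ.
have sza : size a = sumn mu by move: aC; rewrite mem_ct => /andP[/eqP].
have szs : size s.2 = sumn mu by rewrite (le2_size sa).
exists a => //; split; last exact: ca.
exact: le2_trans (dom_mem (FF_top szs).1 uF) sa.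
Qed.

Lemma upper mu i : sorted geq mu -> all (fun p => 0 < p)%N mu -> (0 < i)%N ->
  has_var_ge i (charpoly mu) -> (i <= Hk mu)%N.
Proof.
move=> Hs Hp i0 [c [nz [j [ij cj]]]].
have [t tP [tc t1]] := coef_nz nz.
have [a aC [ta ca]] := char_terms tP t1.
have sza : size a = sumn mu by move: aC; rewrite mem_ct => /andP[/eqP].
have aj : (0 < nth 0%N a j.-1)%N by apply: leq_trans cj _; rewrite -tc le2_nth.
have jm : (j.-1 < sumn mu)%N.
  by rewrite -sza ltnNge; apply/negP => h; move: aj; rewrite nth_default.
have := chi_bound Hs Hp ca => /allP /(_ j); rewrite (_ : j = j.-1.+1); last by lia.
move=> H; apply: (leq_trans ij); rewrite (_ : j = j.-1.+1); last by lia.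
apply: H; apply/flattenP; exists (nseq (nth 0%N a j.-1) j.-1.+1).
  by apply/mapP; exists j.-1; rewrite // mem_iota.
by rewrite mem_nseq aj eqxx.
Qed.

Lemma size_le_sumn (s : seq nat) : all (fun p => 0 < p)%N s -> (size s <= sumn s)%N.
Proof. by elim: s => //= x s IH /andP[x0 /IH]; lia. Qed.

Lemma Hk_le mu : all (fun p => 0 < p)%N mu -> (Hk mu <= sumn mu)%N.
Proof. case: mu => //= x s /andP[x0 /size_le_sumn]; lia. Qed.

Lemma coef_QQ_a0 mu m h : (1 <= h <= m)%N ->
  mp_coef (QQ mu m) (a0 m h) = (cf mu m (a0 m h) * mp_coef (PR m (a0 m h)) (a0 m h)) *+
     count (pred1 (a0 m h)) (cycle_types m).
Proof.
move=> hh; rewrite /QQ coef_bigadd.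
have sa0 := size_a0 m h.
rewrite (eq_big_seq (fun a => if a == a0 m h then cf mu m (a0 m h) * mp_coef (PR m (a0 m h)) (a0 m h) else 0)).
  by rewrite -big_mkcond /= big_const_seq; elim: count => //= n ->; rewrite mulrS.
move=> a aC; rewrite coef_scale.
case: (eqVneq a (a0 m h)) => [->//|na].
have sza : size a = m by move: aC; rewrite mem_ct => /andP[/eqP].
case: (eqVneq (mp_coef (PR m a) (a0 m h)) 0) => [->|nz]; first by rewrite mulr0.
have le := dom_coef (PR_top sza).1 nz.
have wa : wt m a = m by move: aC; rewrite mem_ct => /and3P[_ _ /eqP].
have wa0 : wt m (a0 m h) = m by move: (a0_ct hh); rewrite mem_ct => /and3P[_ _ /eqP].
by have := weight_eq sza le (etrans wa0 (esym wa)); move/esym/eqP; rewrite (negbTE na).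
Qed.

Lemma coef_down_a0 mu m h : (1 <= h <= m)%N ->
  mp_coef (down m (QQ mu m)) (a0 m h) = mp_coef (QQ mu m) (a0 m h).
Proof.
move=> hh; rewrite downE coef_bigadd /mp_coef [RHS]big_mkcond.
apply: eq_big_seq => t tQ /=; rewrite -/(mp_coef (mp_scale _ _) _) coef_scale.
have [a aC [ta _]] := QQ_terms tQ.
have sza : size a = m by move: aC; rewrite mem_ct => /andP[/eqP].
have szt : size t.2 = m by rewrite (le2_size ta).
have [D C] := FF_top szt.
case: (eqVneq t.2 (a0 m h)) => [<-|na]; first by rewrite C mulr1.
case: (eqVneq (mp_coef (FF m t.2) (a0 m h)) 0) => [->|nz]; first by rewrite mulr0.
have le := dom_coef D nz.
have wa : wt m a = m by move: aC; rewrite mem_ct => /and3P[_ _ /eqP].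
have wa0 : wt m (a0 m h) = m by move: (a0_ct hh); rewrite mem_ct => /and3P[_ _ /eqP].
have e := weight_eq sza (le2_trans le ta) (etrans wa0 (esym wa)).
have : t.2 = a0 m h by apply: le2_anti => //; rewrite e.
by move/eqP; rewrite (negbTE na).
Qed.

Lemma lower mu : sorted geq mu -> all (fun p => 0 < p)%N mu -> (0 < size mu)%N ->
  has_var_ge (Hk mu) (charpoly mu).
Proof.
move=> Hs Hp Hl.
set m := sumn mu; set h := Hk mu.
have h1 : (1 <= h)%N by rewrite /h; case: (mu) Hl Hp => //= x s _ /andP[x0 _]; lia.
have hh : (1 <= h <= m)%N by rewrite h1 Hk_le.
exists (a0 m h); split.
  rewrite charpolyE -/m coef_down_a0 // coef_QQ_a0 // -mulr_natr.
  apply: mulf_neq0; last first.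
    by rewrite pnatr_eq0 -lt0n -has_count; apply/hasP; exists (a0 m h); rewrite ?a0_ct /=.
  apply: mulf_neq0.
    rewrite /cf cyc_a0 //; apply: mulf_neq0; first by rewrite intr_eq0 chi_nz.
    rewrite invr_eq0 pnatr_eq0 -lt0n /zee; apply: prodn_gt0 => k.
    by rewrite muln_gt0 fact_gt0 expn_gt0.
  have [_ ->] := PR_top (size_a0 m h).
  by rewrite prodf_seq_neq0; apply/allP => k _ /=; rewrite expf_neq0 // pnatr_eq0.
exists h; split => //.
rewrite nth_a0 ?eqxx; last by case/andP: hh => ? ?; lia.
by rewrite addn1.
Qed.


Lemma key (mu : seq nat) (i : nat) : sorted geq mu -> all (fun p => 0 < p)%N mu ->
  (0 < i)%N -> has_var_ge i (charpoly mu) <-> (i <= Hk mu)%N.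
Proof.
move=> Hs Hp i0; split; first exact: upper.
move=> iH.
have Hl : (0 < size mu)%N by case: (mu) iH => //=; rewrite leqNgt i0.
have [c [nz [j [hj cj]]]] := lower Hs Hp Hl.
by exists c; split => //; exists j; split => //; apply: leq_trans hj.
Qed.

Local Close Scope ring_scope.

Lemma hook21 lam : all (fun p => 0 < p) lam -> hook lam 2 1 = Hk (behead lam).
Proof.
case: lam => [|x [|y r]] //= /andP[x0 /andP[y0 r0]].
rewrite /hook /part /= y0 /conj_part.
case: x x0 => // x _ /=.
have := r0; rewrite all_count => /eqP ->.
rewrite y0 /=. lia.
Qed.

Lemma hook12 lam : sorted geq lam -> all (fun p => 0 < p) lam ->
  hook lam 1 2 = Hk (behead (conj_part lam)).
Proof.
case: lam => [|x r] //= Hs /andP[x0 r0].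
rewrite /hook /part /= /conj_part /=.
case: x x0 Hs => // [[|x]] _ Hs //=.
rewrite /= size_map size_iota.
lia.
Qed.

Lemma conj_sorted lam : sorted geq lam -> all (fun p => 0 < p) lam ->
  sorted geq (behead (conj_part lam)) && all (fun p => 0 < p) (behead (conj_part lam)).
Proof.
case: lam => [|x r] //= Hs /andP[x0 r0].
rewrite /conj_part /=.
case: x x0 Hs => // x _ Hs /=.
apply/andP; split.
  rewrite sorted_map; apply: (sub_sorted _ (iota_ltn_sorted 2 x)).
  move=> a b /= ab; apply: leq_add.
    by case: (leqP b x.+1) => hb //; rewrite (_ : a <= x.+1) //; lia.
  rewrite (@sub_count _ (leq b) (leq a)) //= => p /=; apply: leq_trans; exact: ltnW.
rewrite all_map; apply/allP => j; rewrite mem_iota => /andP[_ jx] /=.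
by rewrite (_ : j <= x.+1) //; lia.
Qed.

Theorem lemma3p1 (n : nat) (lam : seq nat) (i : nat) :
  is_partition n lam -> (1 <= i)%N ->
  (((i <= hook lam 2 1)%N /\ (i <= hook lam 1 2)%N) <->
   (has_var_ge i (charpoly (behead lam)) /\
    has_var_ge i (charpoly (behead (conj_part lam))))).
Proof.
move=> /and3P[Hs Hp _] i1.
have /andP[cs cp] := conj_sorted Hs Hp.
have bs : sorted geq (behead lam) by case: (lam) Hs => //= x r; apply: path_sorted.
have bp : all (fun p => 0 < p) (behead lam) by case: (lam) Hp => //= x r /andP[].
rewrite hook21 // hook12 // (key bs bp i1) (key cs cp i1).
by [].
Qed.
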